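(* Let $\mathbf{X}\subseteq\mathbb{R}_+^n$ be an interval and $\mathrm{IC}(\mathbf{a}_0,\dots,\mathbf{a}_{n-1})$ an interval circulant matrix. Then $\mathrm{IC}(\mathbf{a}_0,\dots,\mathbf{a}_{n-1})$ is universally $\mathbf{X}$-robust, i.e. $x\in\mathrm{Attr}(A)$ for all $A\in\mathrm{IC}(\mathbf{a}_0,\dots,\mathbf{a}_{n-1})$ and all $x\in\mathbf{X}$, if and only if $x^{(j)}\in\mathrm{Attr}(A^{(i)})$ for all $i\in\{0,\dots,n-1\}$ and $j\in\{1,\dots,n\}$.
   Context: Max algebra on $\mathbb{R}_+$: $\oplus=\max$, ordinary product; $\lambda(A)$ greatest max-algebraic eigenvalue (maximum cycle geometric mean); $\mathrm{Attr}(A)=\{x\in\mathbb{R}_+^n: A^{t+1}\otimes x=\lambda(A)A^t\otimes x\text{ for some }t\ge0\}$. An interval $\mathbf{X}=\prod_i\mathbf{X}_i$ has each $\mathbf{X}_i\subseteq\mathbb{R}_+$ nonempty of one of the forms $[\underline{x}_i,\overline{x}_i]$, $(\underline{x}_i,\overline{x}_i)$, $(\underline{x}_i,\overline{x}_i]$, $[\underline{x}_i,\overline{x}_i)$; $x^{(k)}=(\underline{x}_1,\dots,\underline{x}_{k-1},\overline{x}_k,\underline{x}_{k+1},\dots,\underline{x}_n)$. $\mathrm{Circ}(a_0,\dots,a_{n-1})$ has entries $A_{i,j}=a_t$, $t\equiv j-i\pmod n$; $\mathrm{IC}(\mathbf{a}_0,\dots,\mathbf{a}_{n-1})$ is the set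 of all $\mathrm{Circ}(a_0,\dots,a_{n-1})$ with $a_t\in\mathbf{a}_t$, each $\mathbf{a}_t\subseteq\mathbb{R}_+$ a nonempty interval of one of the four forms with endpoints $\underline a_t\le\overline a_t$. $A^{(k)}=\mathrm{Circ}(\underline{a}_0,\dots,\underline{a}_{k-1},\overline{a}_k,\underline{a}_{k+1},\dots,\underline{a}_{n-1})$ for $k\in\{0,\dots,n-1\}$. *)

(* Defs.v *)
From Stdlib Require Import Reals List Arith.
Import ListNotations.
Open Scope R_scope.

(* Matrices and vectors of dimension n: only indices < n are meaningful. *)
Definition mat := nat -> nat -> R.
Definition vec := nat -> R.

(* max_{0 <= k < m} f k  (0 is neutral for maxima of nonnegative numbers) *)
Fixpoint maxr (f : nat -> R) (m : nat) : R :=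
  match m with
  | O => 0
  | S m' => Rmax (maxr f m') (f m')
  end.

Definition mmul (n : nat) (A B : mat) : mat :=
  fun i j => maxr (fun k => A i k * B k j) n.
Definition mvec (n : nat) (A : mat) (x : vec) : vec :=
  fun i => maxr (fun j => A i j * x j) n.
Definition mid : mat := fun i j => if Nat.eqb i j then 1 else 0.
Fixpoint mpow (n : nat) (A : mat) (t : nat) : mat :=
  match t with
  | O => mid
  | S t' => mmul n A (mpow n A t')
  end.

Definition nroot (k : nat) (w : R) : R :=
  if Req_EM_T w 0 then 0 else Rpower w (/ INR k).

Fixpoint seqs (n k : nat) : list (list nat) :=
  match k with
  | O => [nil]
  | S k' => flat_map (fun l => map (fun i => i :: l) (seq 0 n)) (seqs n k')
  end.

Fixpoint path_w (A : mat) (h : nat) (l : list nat) (start : nat) : R :=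
  match l with
  | nil => A h start
  | x :: l' => A h x * path_w A x l' start
  end.

Definition cyc_w (A : mat) (l : list nat) : R :=
  match l with
  | nil => 0
  | i :: l' => path_w A i l' i
  end.

Definition max_list (f : list nat -> R) (L : list (list nat)) : R :=
  fold_right (fun l m => Rmax (f l) m) 0 L.

(* lambda(A): maximum cycle geometric mean over cycles of length 1..n *)
Definition lambda (n : nat) (A : mat) : R :=
  maxr (fun k => nroot (S k) (max_list (cyc_w A) (seqs n (S k)))) n.

Definition Attr (n : nat) (A : mat) (x : vec) : Prop :=
  (forall i, (i < n)%nat -> 0 <= x i) /\
  exists t : nat, forall i, (i < n)%nat ->
    mvec n (mpow n A (S t)) x i = lambda n A * mvec n (mpow n A t) x i.

(* a one-dimensional interval in R_+ with endpoints lo <= hi; cl / cr say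
   whether the left / right endpoint is included *)
Definition in_itv (lo hi : R) (cl cr : bool) (x : R) : Prop :=
  (lo < x \/ (cl = true /\ x = lo)) /\ (x < hi \/ (cr = true /\ x = hi)).
Definition itv_ok (lo hi : R) (cl cr : bool) : Prop :=
  0 <= lo /\ (lo < hi \/ (lo = hi /\ cl = true /\ cr = true)).

Definition Circ (n : nat) (a : nat -> R) : mat :=
  fun i j => a ((n + j - i) mod n)%nat.

(* x^(k) (k in 1..n): upper endpoint in coordinate k, lower elsewhere
   (coordinates are 0-based, coordinate k of the paper is index k-1) *)
Definition xk (xlo xhi : vec) (k : nat) : vec :=
  fun i => if Nat.eqb i (k - 1) then xhi i else xlo i.

Definition Ak (n : nat) (alo ahi : nat -> R) (k : nat) : mat :=
  Circ n (fun t => if Nat.eqb t k then ahi t else alo t).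

(* Main.v *)
Require Import Defs.
From Stdlib Require Import Reals Lra Lia List Arith Classical.
Import ListNotations.
Open Scope R_scope.


Lemma maxr_ge0 f m : 0 <= maxr f m.
Proof. induction m; simpl; [lra|]. apply Rle_trans with (maxr f m); auto; apply Rmax_l. Qed.

Lemma maxr_ub f m j : (j < m)%nat -> f j <= maxr f m.
Proof.
  induction m; intros H; [lia|]. simpl.
  destruct (Nat.eq_dec j m) as [->|Hne]; [apply Rmax_r|].
  apply Rle_trans with (maxr f m); [apply IHm; lia|apply Rmax_l].
Qed.

Lemma maxr_lub f m c : 0 <= c -> (forall j, (j < m)%nat -> f j <= c) -> maxr f m <= c.
Proof.
  intros Hc; induction m; intros H; simpl; [lra|].
  apply Rmax_lub; [apply IHm; intros; apply H; lia| apply H; lia].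
Qed.

Lemma maxr_attain f m : (0 < m)%nat -> (forall j, (j < m)%nat -> 0 <= f j) ->
  exists j, (j < m)%nat /\ maxr f m = f j.
Proof.
  induction m; intros Hm H; [lia|].
  destruct m.
  - exists 0%nat; split; [lia|]. simpl. apply Rmax_right. apply H; lia.
  - destruct IHm as [j [Hj Ej]]; [lia| intros; apply H; lia|].
    change (maxr f (S (S m))) with (Rmax (maxr f (S m)) (f (S m))).
    rewrite Ej. destruct (Rle_dec (f j) (f (S m))).
    + exists (S m); split; [lia|]. apply Rmax_right; auto.
    + exists j; split; [lia|]. apply Rmax_left; lra.
Qed.

Lemma maxr_ext f g m : (forall j, (j < m)%nat -> f j = g j) -> maxr f m = maxr g m.
Proof. induction m; intros H; simpl; auto. rewrite IHm, H; auto; intros; apply H; lia. Qed.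

Lemma maxr_mono f g m : (forall j, (j < m)%nat -> f j <= g j) -> maxr f m <= maxr g m.
Proof.
  intros H; apply maxr_lub; [apply maxr_ge0|]. intros j Hj.
  apply Rle_trans with (g j); auto. apply maxr_ub; auto.
Qed.

Lemma maxr_scale f m c : 0 <= c -> maxr (fun j => c * f j) m = c * maxr f m.
Proof.
  intros Hc; induction m; simpl; [ring|]. rewrite IHm. apply RmaxRmult; auto.
Qed.

Lemma mod_small' a n : (a < n)%nat -> (a mod n = a)%nat.
Proof. apply Nat.mod_small. Qed.

Lemma circ_idx n i j : (i < n)%nat -> (j < n)%nat -> ((i + (n + j - i) mod n) mod n = j)%nat.
Proof.
  intros Hi Hj. rewrite Nat.Div0.add_mod_idemp_r.
  replace (i + (n + j - i))%nat with (j + 1 * n)%nat by lia.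
  rewrite Nat.Div0.mod_add. apply Nat.mod_small; auto.
Qed.

Lemma circ_step_idx n i s : (i < n)%nat -> (s < n)%nat -> ((n + (i + s) mod n - i) mod n = s)%nat.
Proof.
  intros Hi Hs. destruct (Nat.lt_ge_cases (i + s) n) as [H|H].
  - rewrite (Nat.mod_small (i+s)) by auto.
    replace (n + (i + s) - i)%nat with (s + 1 * n)%nat by lia.
    rewrite Nat.Div0.mod_add. apply Nat.mod_small; auto.
  - assert (E : ((i + s) mod n = i + s - n)%nat).
    { replace (i + s)%nat with ((i + s - n) + 1 * n)%nat at 1 by lia.
      rewrite Nat.Div0.mod_add. apply Nat.mod_small; lia. }
    rewrite E. replace (n + (i + s - n) - i)%nat with s by lia. apply Nat.mod_small; auto.
Qed.

Lemma circ_step n a i s : (i < n)%nat -> (s < n)%nat -> Circ n a i ((i + s) mod n) = a s.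
Proof. intros; unfold Circ. rewrite circ_step_idx; auto. Qed.

Lemma circ_nonneg n a i j : (0 < n)%nat -> (forall s, (s < n)%nat -> 0 <= a s) -> 0 <= Circ n a i j.
Proof. intros Hn Ha; unfold Circ; apply Ha; apply Nat.mod_upper_bound; lia. Qed.

Lemma circ_le n a i j M : (0 < n)%nat -> (forall s, (s < n)%nat -> a s <= M) -> Circ n a i j <= M.
Proof. intros Hn Ha; unfold Circ; apply Ha; apply Nat.mod_upper_bound; lia. Qed.

Lemma mvec_ge0 n M y i : 0 <= mvec n M y i.
Proof. apply maxr_ge0. Qed.

Lemma mpow_ge0 n A t i j : 0 <= mpow n A t i j.
Proof. destruct t; simpl; [unfold mid; destruct (Nat.eqb i j); lra| apply maxr_ge0]. Qed.

Lemma mvec_assoc n A M y i : (0 < n)%nat ->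
  (forall k, (k < n)%nat -> 0 <= A i k) -> (forall k j, 0 <= M k j) ->
  (forall j, (j < n)%nat -> 0 <= y j) ->
  mvec n (mmul n A M) y i = mvec n A (mvec n M y) i.
Proof.
  intros Hn HA HM Hy. unfold mvec, mmul. apply Rle_antisym.
  - apply maxr_lub; [apply maxr_ge0|]. intros j Hj.
    destruct (maxr_attain (fun k => A i k * M k j) n) as [k [Hk Ek]]; auto.
    { intros; apply Rmult_le_pos; auto. }
    rewrite Ek. apply Rle_trans with (A i k * maxr (fun j0 => M k j0 * y j0) n).
    + rewrite Rmult_assoc. apply Rmult_le_compat_l; auto.
      apply (maxr_ub (fun j0 => M k j0 * y j0)); auto.
    + apply (maxr_ub (fun k0 => A i k0 * maxr (fun j0 => M k0 j0 * y j0) n)); auto.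
  - apply maxr_lub; [apply maxr_ge0|]. intros k Hk.
    destruct (maxr_attain (fun j => M k j * y j) n) as [j [Hj Ej]]; auto.
    { intros; apply Rmult_le_pos; auto. }
    rewrite Ej. apply Rle_trans with (maxr (fun k0 => A i k0 * M k0 j) n * y j).
    + rewrite <- Rmult_assoc. apply Rmult_le_compat_r; auto.
      apply (maxr_ub (fun k0 => A i k0 * M k0 j)); auto.
    + apply (maxr_ub (fun j0 => maxr (fun k0 => A i k0 * M k0 j0) n * y j0)); auto.
Qed.

Definition it n A t y := mvec n (mpow n A t) y.

Section It.
Variable n : nat.
Variable A : mat.
Hypothesis Hn : (0 < n)%nat.
Hypothesis HA : forall i k, 0 <= A i k.

Lemma it_S t y i : (forall j, (j < n)%nat -> 0 <= y j) ->
  it n A (S t) y i = mvec n A (it n A t y) i.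
Proof. intros Hy; unfold it; simpl. apply mvec_assoc; auto. intros; apply mpow_ge0. Qed.

Lemma it_0 y i : (i < n)%nat -> (forall j, (j < n)%nat -> 0 <= y j) -> it n A 0 y i = y i.
Proof.
  intros Hi Hy; unfold it, mvec; simpl. apply Rle_antisym.
  - apply maxr_lub; auto. intros j Hj. unfold mid. destruct (Nat.eqb_spec i j); subst; [lra|].
    rewrite Rmult_0_l; auto.
  - apply Rle_trans with (mid i i * y i).
    + unfold mid; rewrite Nat.eqb_refl; lra.
    + apply (maxr_ub (fun j => mid i j * y j)); auto.
Qed.

Lemma mvec_ext M y y' i : (forall j, (j < n)%nat -> y j = y' j) -> mvec n M y i = mvec n M y' i.
Proof. intros H; unfold mvec; apply maxr_ext; intros j Hj; rewrite H; auto. Qed.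

Lemma it_ext t y y' i : (forall j, (j < n)%nat -> y j = y' j) -> it n A t y i = it n A t y' i.
Proof. apply mvec_ext. Qed.

Lemma mvec_homog M c y i : 0 <= c -> mvec n M (fun j => c * y j) i = c * mvec n M y i.
Proof.
  intros Hc; unfold mvec. rewrite <- maxr_scale; auto. apply maxr_ext; intros; ring.
Qed.

Lemma it_homog t c y i : 0 <= c -> it n A t (fun j => c * y j) i = c * it n A t y i.
Proof. apply mvec_homog. Qed.

Lemma mvec_mono M y y' i : (forall k j, 0 <= M k j) -> (forall j, (j < n)%nat -> y j <= y' j) ->
  mvec n M y i <= mvec n M y' i.
Proof.
  intros HM H; unfold mvec; apply maxr_mono; intros j Hj. apply Rmult_le_compat_l; auto.
Qed.

Lemma it_mono t y y' i : (forall j, (j < n)%nat -> y j <= y' j) -> it n A t y i <= it n A t y' i.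
Proof. intros; apply mvec_mono; auto; intros; apply mpow_ge0. Qed.

Lemma it_add a b x i : (i < n)%nat -> (forall j, (j < n)%nat -> 0 <= x j) ->
  it n A a (it n A b x) i = it n A (a + b) x i.
Proof.
  intros Hi Hx. revert i Hi. induction a; intros i Hi.
  - simpl. apply it_0; auto. intros; apply mvec_ge0.
  - rewrite it_S by (intros; apply mvec_ge0). simpl plus. rewrite (it_S (a + b)) by auto.
    apply mvec_ext. intros j Hj; apply IHa; auto.
Qed.

End It.

Fixpoint prodR (l : list R) : R := match l with nil => 1 | x :: l' => x * prodR l' end.
Fixpoint lsum (l : list nat) : nat := match l with nil => 0%nat | x :: l' => (x + lsum l')%nat end.
Definition prodA (a : nat -> R) (l : list nat) := prodR (map a l).

Lemma prodR_app l1 l2 : prodR (l1 ++ l2) = prodR l1 * prodR l2.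
Proof. induction l1; simpl; [ring|rewrite IHl1; ring]. Qed.
Lemma lsum_app l1 l2 : lsum (l1 ++ l2) = (lsum l1 + lsum l2)%nat.
Proof. induction l1; simpl; lia. Qed.
Lemma prodR_ge0 l : (forall u, In u l -> 0 <= u) -> 0 <= prodR l.
Proof. induction l; simpl; intros H; [lra|]. apply Rmult_le_pos; auto. Qed.
Lemma prodR_repeat v m : prodR (repeat v m) = v ^ m.
Proof. induction m; simpl; auto. rewrite IHm; auto. Qed.

Section Walk.
Variable n : nat.
Variable a : nat -> R.
Hypothesis Hn : (0 < n)%nat.
Hypothesis Ha : forall s, (s < n)%nat -> 0 <= a s.

Lemma prodA_ge0 l : Forall (fun s => s < n)%nat l -> 0 <= prodA a l.
Proof.
  intros H; unfold prodA; apply prodR_ge0. intros u Hu. apply in_map_iff in Hu.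
  destruct Hu as [s [<- Hs]]. apply Ha. rewrite Forall_forall in H; auto.
Qed.

Lemma HA : forall i k, 0 <= Circ n a i k.
Proof. intros; apply circ_nonneg; auto. Qed.

Definition endp i l := ((i + lsum l) mod n)%nat.

Lemma endp_cons i s l : endp i (s :: l) = endp ((i + s) mod n) l.
Proof. unfold endp; simpl. rewrite Nat.Div0.add_mod_idemp_l. f_equal; lia. Qed.

Lemma endp_lt i l : (endp i l < n)%nat.
Proof. unfold endp; apply Nat.mod_upper_bound; lia. Qed.

Variable y : nat -> R.
Hypothesis Hy : forall j, (j < n)%nat -> 0 <= y j.

Lemma walk_ub t : forall l, length l = t -> Forall (fun s => s < n)%nat l ->
  forall i, (i < n)%nat -> prodA a l * y (endp i l) <= it n (Circ n a) t y i.
Proof.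
  induction t; intros l Hl Hf i Hi.
  - destruct l; [|simpl in Hl; lia]. unfold prodA, endp; simpl.
    rewrite Nat.add_0_r, Nat.mod_small by auto. rewrite it_0; auto; try lra; apply HA.
  - destruct l as [|s l]; [simpl in Hl; lia|]. inversion Hf; subst.
    simpl in Hl. rewrite endp_cons.
    set (j := ((i + s) mod n)%nat).
    assert (Hj : (j < n)%nat) by (apply Nat.mod_upper_bound; lia).
    rewrite it_S; auto; try apply HA.
    unfold prodA; simpl map; simpl prodR. fold (prodA a l). rewrite Rmult_assoc.
    apply Rle_trans with (Circ n a i j * it n (Circ n a) t y j).
    + unfold j; rewrite circ_step; auto. apply Rmult_le_compat_l; auto.
    + apply (maxr_ub (fun j0 => Circ n a i j0 * it n (Circ n a) t y j0)); auto.
Qed.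

Lemma walk_attain t : forall i, (i < n)%nat -> exists l, length l = t /\
  Forall (fun s => s < n)%nat l /\ it n (Circ n a) t y i = prodA a l * y (endp i l).
Proof.
  induction t; intros i Hi.
  - exists nil; repeat split; auto. unfold prodA, endp; simpl.
    rewrite Nat.add_0_r, Nat.mod_small by auto. rewrite it_0; auto; try lra; apply HA.
  - rewrite it_S; auto; [|apply HA].
    destruct (maxr_attain (fun j => Circ n a i j * it n (Circ n a) t y j) n) as [j [Hj Ej]]; auto.
    { intros; apply Rmult_le_pos; [apply HA| apply mvec_ge0]. }
    unfold mvec at 1. rewrite Ej.
    destruct (IHt j Hj) as [l [Hl [Hf El]]].
    set (s := ((n + j - i) mod n)%nat).
    assert (Hs : (s < n)%nat) by (apply Nat.mod_upper_bound; lia).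
    exists (s :: l); repeat split; simpl; auto.
    rewrite endp_cons. unfold s; rewrite circ_idx; auto. rewrite El.
    unfold prodA; simpl. unfold Circ. fold s. ring.
Qed.

End Walk.

Lemma pigeon : forall n (f : nat -> nat), (forall j, (j <= n)%nat -> (f j < n)%nat) ->
  exists p q, (p < q)%nat /\ (q <= n)%nat /\ f p = f q.
Proof.
  induction n; intros f H.
  - specialize (H 0%nat (le_n 0)); lia.
  - destruct (classic (exists j, (j <= n)%nat /\ f j = f (S n))) as [[j [Hj E]]|Hno].
    + exists j, (S n); repeat split; auto; lia.
    + set (g := fun j => if Nat.eqb (f j) n then f (S n) else f j).
      destruct (IHn g) as [p [q [Hpq [Hq E]]]].
      { intros j Hj. unfold g. destruct (Nat.eqb_spec (f j) n).
        - assert (f (S n) <> n) by (intro; apply Hno; exists j; split; [lia|congruence]).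
          specialize (H (S n) (le_n _)); lia.
        - specialize (H j ltac:(lia)); lia. }
      unfold g in E. destruct (Nat.eqb_spec (f p) n); destruct (Nat.eqb_spec (f q) n).
      * exists p, q; repeat split; auto; lia.
      * exfalso; apply Hno; exists q; split; [lia|congruence].
      * exfalso; apply Hno; exists p; split; [lia|congruence].
      * exists p, q; repeat split; auto; lia.
Qed.

Lemma modeq_of n x y p q : (0 < n)%nat -> (x + p * n = y + q * n)%nat -> (x mod n = y mod n)%nat.
Proof.
  intros Hn E. rewrite <- (Nat.Div0.mod_add x p n), <- (Nat.Div0.mod_add y q n). f_equal; lia.
Qed.

Lemma lsum_repeat k m : lsum (repeat k m) = (m * k)%nat.
Proof. induction m; simpl; lia. Qed.

Lemma prodA_le_pow a l L : (forall s, In s l -> 0 <= a s <= L) -> prodA a l <= L ^ length l.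
Proof.
  induction l; intros H; unfold prodA; simpl; [lra|]. fold (prodA a l).
  assert (0 <= a a0 <= L) by (apply H; simpl; auto).
  apply Rmult_le_compat; try lra.
  - apply prodR_ge0. intros u Hu; apply in_map_iff in Hu. destruct Hu as [s [<- Hs]]; apply H; simpl; auto.
  - apply IHl; intros; apply H; simpl; auto.
Qed.

Lemma prodA_app a l1 l2 : prodA a (l1 ++ l2) = prodA a l1 * prodA a l2.
Proof. unfold prodA; rewrite map_app, prodR_app; auto. Qed.

Lemma firstn_split (l : list nat) p q : (p <= q)%nat ->
  firstn q l = firstn p l ++ firstn (q - p) (skipn p l).
Proof.
  intros H. rewrite <- (firstn_skipn p l) at 1. rewrite firstn_app.
  destruct (Nat.le_ge_cases (length l) p).
  - rewrite skipn_all2 by auto. rewrite !firstn_nil, app_nil_r.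
    rewrite (firstn_all2 (n:=p) l) by auto. rewrite firstn_all2 by lia. rewrite app_nil_r; auto.
  - rewrite firstn_length_le by auto. rewrite firstn_all2 by (rewrite firstn_length_le; lia). auto.
Qed.

Section Trans.
Variable n : nat.
Variable a : nat -> R.
Variable k : nat.
Hypothesis Hn : (0 < n)%nat.
Hypothesis Hk : (k < n)%nat.
Hypothesis Ha : forall s, (s < n)%nat -> 0 <= a s <= a k.

Lemma transform l : (n <= length l)%nat -> Forall (fun s => s < n)%nat l ->
  exists l', length l' = (length l - 1)%nat /\ Forall (fun s => s < n)%nat l' /\
    prodA a l <= a k * prodA a l' /\ (lsum l mod n = (k + lsum l') mod n)%nat.
Proof.
  intros Hlen Hf.
  set (c := ((n - 1) * k)%nat).
  destruct (pigeon n (fun j => ((lsum (firstn j l) + j * c) mod n)%nat)) as [p [q [Hpq [Hq E]]]].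
  { intros; apply Nat.mod_upper_bound; lia. }
  set (P := firstn p l). set (d := (q - p)%nat). set (B := firstn d (skipn p l)).
  set (Q := skipn q l).
  assert (El : l = P ++ B ++ Q).
  { unfold P, B, Q, d. rewrite app_assoc, <- firstn_split by lia. symmetry; apply firstn_skipn. }
  assert (Eq : firstn q l = P ++ B) by (unfold P, B, d; apply firstn_split; lia).
  assert (HlP : length P = p) by (unfold P; apply firstn_length_le; lia).
  assert (HlB : length B = d).
  { unfold B; rewrite firstn_length_le; auto. rewrite length_skipn; unfold d; lia. }
  assert (HlQ : length Q = (length l - q)%nat) by (unfold Q; apply length_skipn).
  simpl in E. fold P in E. rewrite Eq, lsum_app in E.
  assert (EB : (lsum B mod n = (d * k) mod n)%nat).
  { set (sP := lsum P) in *. set (sB := lsum B) in *.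
    set (r1 := ((sP + p * c) mod n)%nat) in *. set (r2 := ((sP + sB + q * c) mod n)%nat) in *.
    set (q1 := ((sP + p * c) / n)%nat) in *. set (q2 := ((sP + sB + q * c) / n)%nat) in *.
    assert (E1 : (sP + p * c = n * q1 + r1)%nat) by (unfold q1, r1; apply Nat.div_mod_eq).
    assert (E2 : (sP + sB + q * c = n * q2 + r2)%nat) by (unfold q2, r2; apply Nat.div_mod_eq).
    assert (Ec : (c + k = n * k)%nat) by (unfold c; destruct n; [lia|]; simpl; lia).
    assert (Eqd : q = (p + d)%nat) by (unfold d; lia).
    apply (modeq_of n _ _ (q1 + d * k) q2); auto.
    assert (X : (sB + d * c = n * q2 - n * q1)%nat) by (rewrite Eqd in E2; nia).
    nia. }
  exists (P ++ repeat k (d - 1) ++ Q). repeat split.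
  - rewrite !length_app, repeat_length. rewrite HlP, HlQ. unfold d; lia.
  - rewrite El in Hf. apply Forall_app in Hf as [HP HBQ]. apply Forall_app in HBQ as [HB HQ].
    apply Forall_app; split; auto. apply Forall_app; split; auto.
    apply Forall_forall; intros x Hx; apply repeat_spec in Hx; lia.
  - rewrite El. rewrite !prodA_app.
    assert (Hall : forall s, In s l -> (s < n)%nat) by (rewrite Forall_forall in Hf; auto).
    assert (HB : prodA a B <= a k ^ d).
    { rewrite <- HlB. apply prodA_le_pow. intros s Hs. apply Ha. apply Hall. rewrite El.
      apply in_or_app; right; apply in_or_app; left; auto. }
    assert (Hrep : prodA a (repeat k (d - 1)) = a k ^ (d - 1)).
    { unfold prodA. rewrite map_repeat, prodR_repeat; auto. }
    rewrite Hrep.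
    assert (0 <= prodA a P).
    { apply (prodA_ge0 n); auto. intros s Hs; apply Ha; auto. rewrite Forall_forall; intros x Hx; apply Hall; rewrite El; apply in_or_app; auto. }
    assert (0 <= prodA a Q).
    { apply (prodA_ge0 n); auto. intros s Hs; apply Ha; auto. rewrite Forall_forall; intros x Hx; apply Hall; rewrite El; apply in_or_app; right; apply in_or_app; auto. }
    assert (Hd : d = S (d - 1)) by (unfold d; lia).
    rewrite Hd in HB. simpl in HB.
    assert (0 <= prodA a B).
    { apply (prodA_ge0 n); auto. intros s Hs; apply Ha; auto.
      rewrite Forall_forall; intros x Hx; apply Hall; rewrite El; apply in_or_app; right; apply in_or_app; auto. }
    apply Rle_trans with (prodA a P * (a k * a k ^ (d - 1) * prodA a Q)).
    + apply Rmult_le_compat_l; auto. apply Rmult_le_compat_r; auto.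
    + right; ring.
  - rewrite El, !lsum_app, lsum_repeat.
    replace (lsum P + (lsum B + lsum Q))%nat with ((lsum P + lsum Q) + lsum B)%nat by lia.
    rewrite <- Nat.Div0.add_mod_idemp_r, EB, Nat.Div0.add_mod_idemp_r.
    f_equal. assert (Hd : (1 <= d)%nat) by (unfold d; lia). nia.
Qed.

End Trans.

Lemma modA n i u v : (((i + u) mod n + v) mod n = (i + (u + v)) mod n)%nat.
Proof. rewrite Nat.Div0.add_mod_idemp_l. f_equal; lia. Qed.

Lemma modB n i w : (i < n)%nat -> ((i + w * n) mod n = i)%nat.
Proof. intros; rewrite Nat.Div0.mod_add; apply Nat.mod_small; auto. Qed.

Section Char.
Variable n : nat.
Variable a : nat -> R.
Variable k : nat.
Hypothesis Hn : (0 < n)%nat.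
Hypothesis Hk : (k < n)%nat.
Hypothesis Ha : forall s, (s < n)%nat -> 0 <= a s <= a k.

Local Notation A := (Circ n a).
Local Notation lam := (a k).

Lemma Ha0 : forall s, (s < n)%nat -> 0 <= a s.
Proof. intros s Hs; apply Ha; auto. Qed.

Lemma HA' : forall i j, 0 <= A i j.
Proof. intros; apply circ_nonneg; auto. apply Ha0. Qed.

Lemma lam_ge0 : 0 <= lam.
Proof. apply Ha; auto. Qed.

Section Y.
Variable y : nat -> R.
Hypothesis Hy : forall j, (j < n)%nat -> 0 <= y j.

Lemma stepG t i : (i < n)%nat -> lam * it n A t y ((i + k) mod n) <= it n A (S t) y i.
Proof.
  intros Hi.
  assert (Hj : ((i + k) mod n < n)%nat) by (apply Nat.mod_upper_bound; lia).
  destruct (walk_attain n a Hn Ha0 y Hy t _ Hj) as [l [Hl [Hf E]]].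
  rewrite E.
  replace (a k * (prodA a l * y (endp n ((i + k) mod n) l))) with
    (prodA a (k :: l) * y (endp n i (k :: l))).
  - apply (walk_ub n a Hn Ha0 y Hy (S t)); simpl; auto.
  - rewrite endp_cons by auto. unfold prodA; simpl. ring.
Qed.

Lemma stepK t i : (n <= S t)%nat -> (i < n)%nat ->
  it n A (S t) y i <= lam * it n A t y ((i + k) mod n).
Proof.
  intros Ht Hi.
  destruct (walk_attain n a Hn Ha0 y Hy (S t) i Hi) as [l [Hl [Hf E]]].
  rewrite E. destruct (transform n a k Hn Hk Ha l) as [l' [Hl' [Hf' [Hp Hs]]]]; auto; try lia.
  assert (Hj : ((i + k) mod n < n)%nat) by (apply Nat.mod_upper_bound; lia).
  assert (Ee : endp n i l = endp n ((i + k) mod n) l').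
  { unfold endp. rewrite modA. rewrite <- Nat.Div0.add_mod_idemp_r, Hs, Nat.Div0.add_mod_idemp_r. auto. }
  rewrite Ee.
  apply Rle_trans with (lam * (prodA a l' * y (endp n ((i + k) mod n) l'))).
  - rewrite <- Rmult_assoc. apply Rmult_le_compat_r; auto. apply Hy, endp_lt; auto.
  - apply Rmult_le_compat_l; [apply lam_ge0|]. apply (walk_ub n a Hn Ha0 y Hy t); auto; lia.
Qed.

Lemma stepEq t i : (n <= S t)%nat -> (i < n)%nat ->
  it n A (S t) y i = lam * it n A t y ((i + k) mod n).
Proof. intros; apply Rle_antisym; [apply stepK| apply stepG]; auto. Qed.

Lemma powEq m : forall i, (i < n)%nat ->
  it n A (n - 1 + m) y i = lam ^ m * it n A (n - 1) y ((i + m * k) mod n).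
Proof.
  induction m; intros i Hi.
  - simpl. rewrite Nat.add_0_r, Nat.add_0_r, Nat.mod_small by auto. ring.
  - replace (n - 1 + S m)%nat with (S (n - 1 + m)) by lia.
    rewrite stepEq by (auto; lia).
    rewrite IHm by (apply Nat.mod_upper_bound; lia).
    rewrite modA. simpl pow. replace (k + m * k)%nat with (S m * k)%nat by lia. ring.
Qed.

Lemma powG m : forall i, (i < n)%nat -> lam ^ m * y ((i + m * k) mod n) <= it n A m y i.
Proof.
  induction m; intros i Hi.
  - simpl. rewrite Nat.add_0_r, Nat.mod_small by auto. rewrite it_0; auto; try lra; apply HA'.
  - assert (Hj : ((i + k) mod n < n)%nat) by (apply Nat.mod_upper_bound; lia).
    eapply Rle_trans; [|apply stepG; auto].
    simpl pow. rewrite Rmult_assoc. apply Rmult_le_compat_l; [apply lam_ge0|].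
    eapply Rle_trans; [|apply IHm; auto]. rewrite modA.
    replace (k + m * k)%nat with (S m * k)%nat by lia. lra.
Qed.
End Y.

Lemma it_ge0 t y i : 0 <= it n A t y i.
Proof. apply mvec_ge0. Qed.

Lemma attr_char x : lambda n A = lam ->
  Attr n A x <-> ((forall i, (i < n)%nat -> 0 <= x i) /\
    forall i, (i < n)%nat -> lam ^ (n - 1) * x i <= it n A (n - 1) x i).
Proof.
  intros Hlam. unfold Attr. rewrite Hlam. split.
  - intros [Hx [t Ht]]. split; auto. fold (it n A) in Ht.
    destruct (Req_dec lam 0) as [L0|Lp].
    + intros i Hi. destruct (n - 1)%nat eqn:En.
      * rewrite it_0; auto; try (simpl; lra); try apply HA'.
      * rewrite L0, pow_i by lia. rewrite Rmult_0_l. apply it_ge0.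
    + assert (Lpos : 0 < lam) by (pose proof lam_ge0; lra).
      set (z := it n A (n - 1) x).
      assert (Prop1 : forall d i, (i < n)%nat -> it n A (S (t + d)) x i = lam * it n A (t + d) x i).
      { induction d; intros i Hi.
        - rewrite Nat.add_0_r; apply Ht; auto.
        - replace (t + S d)%nat with (S (t + d)) by lia.
          rewrite it_S; auto; try apply HA'.
          rewrite (mvec_ext n A _ (fun j => lam * it n A (t + d) x j)) by (intros; apply IHd; auto).
          rewrite mvec_homog by (apply lam_ge0). rewrite <- it_S; auto. apply HA'. }
      assert (Hz : forall i, (i < n)%nat -> z ((i + S t * k) mod n) = z ((i + t * k) mod n)).
      { intros i Hi. pose proof (Prop1 (n - 1)%nat i Hi) as P.
        replace (t + (n - 1))%nat with (n - 1 + t)%nat in P by lia.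
        replace (S (n - 1 + t)) with (n - 1 + S t)%nat in P by lia.
        rewrite !powEq in P by auto. simpl pow in P.
        fold z in P. apply Rmult_eq_reg_l with (lam * lam ^ t); [|apply Rmult_integral_contrapositive; split; auto; apply pow_nonzero; lra].
        rewrite P; ring. }
      assert (Sz : forall i, (i < n)%nat -> z ((i + k) mod n) = z i).
      { intros i Hi. set (i' := ((i + t * ((n - 1) * k)) mod n)%nat).
        assert (Hi' : (i' < n)%nat) by (apply Nat.mod_upper_bound; lia).
        pose proof (Hz i' Hi') as H. unfold i' in H. rewrite !modA in H.
        replace (t * ((n - 1) * k) + S t * k)%nat with ((i + k) - i + t * k * n)%nat in H.
        2:{ destruct n; [lia|]. simpl. replace (S n0 - 1)%nat with n0 by lia. nia. }
        replace (t * ((n - 1) * k) + t * k)%nat with (t * k * n)%nat in H.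
        2:{ destruct n; [lia|]. replace (S n0 - 1)%nat with n0 by lia. nia. }
        replace (i + (i + k - i + t * k * n))%nat with ((i + k) + t * k * n)%nat in H by lia.
        rewrite Nat.Div0.mod_add in H. rewrite modB in H; auto. }
      intros i Hi. pose proof (powG x Hx n i Hi) as G.
      replace (i + n * k)%nat with (i + k * n)%nat in G by lia. rewrite modB in G by auto.
      assert (En : it n A n x i = it n A (n - 1 + 1) x i) by (f_equal; lia). rewrite En, powEq in G by auto.
      fold z in G. rewrite Nat.mul_1_l, Sz in G by auto.
      replace n with (S (n - 1)) in G at 1 by lia. simpl pow in G.
      apply Rmult_le_reg_l with lam; auto. lra.
  - intros [Hx Hphi]. split; auto. fold (it n A).
    destruct (Req_dec lam 0) as [L0|Lp].
    + exists 0%nat. intros i Hi. rewrite L0, Rmult_0_l. change (it n A 1 x i = 0). rewrite it_S; auto; try apply HA'.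
      apply Rle_antisym; [|apply mvec_ge0]. apply maxr_lub; [lra|]. intros j Hj.
      assert (A i j = 0).
      { unfold Circ. assert (Hs : ((n + j - i) mod n < n)%nat) by (apply Nat.mod_upper_bound; lia).
        pose proof (Ha _ Hs). lra. }
      rewrite H; lra.
    + assert (Lpos : 0 < lam) by (pose proof lam_ge0; lra).
      set (z := it n A (n - 1) x).
      assert (Hz0 : forall j, (j < n)%nat -> 0 <= z j) by (intros; apply it_ge0).
      assert (Mono : forall i, (i < n)%nat -> z i <= z ((i + (n - 1) * k) mod n)).
      { intros i Hi.
        assert (H1 : lam ^ (n - 1) * z i <= it n A (n - 1) z i).
        { unfold z. rewrite <- it_homog by (apply pow_le; apply lam_ge0). apply it_mono; auto. }
        unfold z in H1 at 2. rewrite (it_add n A Hn HA') in H1 by auto. rewrite powEq in H1 by auto. fold z in H1.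
        apply Rmult_le_reg_l with (lam ^ (n - 1)); auto. apply pow_lt; auto. }
      assert (Chain : forall m i, (i < n)%nat -> z i <= z ((i + m * ((n - 1) * k)) mod n)).
      { induction m; intros i Hi.
        - rewrite Nat.add_0_r, Nat.mod_small by auto; lra.
        - eapply Rle_trans; [apply IHm; auto|]. eapply Rle_trans; [apply Mono; apply Nat.mod_upper_bound; lia|].
          rewrite modA. replace (m * ((n - 1) * k) + (n - 1) * k)%nat with (S m * ((n - 1) * k))%nat by lia. lra. }
      assert (Fix : forall i, (i < n)%nat -> z ((i + (n - 1) * k) mod n) = z i).
      { intros i Hi. apply Rle_antisym; [|apply Mono; auto].
        assert (Hj : ((i + (n - 1) * k) mod n < n)%nat) by (apply Nat.mod_upper_bound; lia).
        eapply Rle_trans; [apply (Chain (n - 1)%nat _ Hj)|]. rewrite modA.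
        replace ((n - 1) * k + (n - 1) * ((n - 1) * k))%nat with ((n - 1) * k * n)%nat.
        2:{ destruct n; [lia|]. replace (S n0 - 1)%nat with n0 by lia. nia. }
        rewrite modB; auto; lra. }
      assert (Sz : forall i, (i < n)%nat -> z ((i + k) mod n) = z i).
      { intros i Hi. assert (Hj : ((i + k) mod n < n)%nat) by (apply Nat.mod_upper_bound; lia).
        rewrite <- (Fix _ Hj). rewrite modA.
        replace (k + (n - 1) * k)%nat with (k * n)%nat.
        2:{ destruct n; [lia|]. replace (S n0 - 1)%nat with n0 by lia. nia. }
        rewrite modB; auto. }
      exists (n - 1)%nat. intros i Hi. change (it n A (S (n - 1)) x i = lam * it n A (n - 1) x i).
      replace (S (n - 1)) with (n - 1 + 1)%nat by lia. rewrite powEq by auto.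
      rewrite Nat.mul_1_l, Sz by auto. fold z. ring.
Qed.

End Char.

Lemma seqs_len n m l : In l (seqs n m) -> length l = m.
Proof.
  revert l; induction m; simpl; intros l H.
  - destruct H as [<-|[]]; auto.
  - apply in_flat_map in H. destruct H as [l' [H1 H2]]. apply in_map_iff in H2.
    destruct H2 as [x [<- _]]. simpl; f_equal; auto.
Qed.

Lemma seqs_in n m l : length l = m -> Forall (fun s => s < n)%nat l -> In l (seqs n m).
Proof.
  revert l; induction m; intros l Hl Hf; simpl.
  - destruct l; [left; auto| simpl in Hl; lia].
  - destruct l as [|x l]; [simpl in Hl; lia|]. inversion Hf; subst.
    apply in_flat_map. exists l; split; [apply IHm; auto|]. apply in_map_iff. exists x; split; auto.
    apply in_seq; lia.
Qed.

Lemma max_list_ge0 f L : 0 <= max_list f L.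
Proof. induction L; simpl; [lra|]. apply Rle_trans with (max_list f L); auto; apply Rmax_r. Qed.

Lemma max_list_ub f L l : In l L -> f l <= max_list f L.
Proof.
  induction L; simpl; [tauto|]. intros [<-|H]; [apply Rmax_l|].
  apply Rle_trans with (max_list f L); auto; apply Rmax_r.
Qed.

Lemma max_list_lub f L c : 0 <= c -> (forall l, In l L -> f l <= c) -> max_list f L <= c.
Proof. induction L; simpl; intros Hc H; [lra|]. apply Rmax_lub; auto. Qed.

Lemma path_w_le A M h l s : (forall i j, 0 <= A i j <= M) -> 0 <= path_w A h l s <= M ^ S (length l).
Proof.
  intros HA. revert h; induction l; intros h; simpl.
  - specialize (HA h s). lra.
  - specialize (IHl a). specialize (HA h a). simpl in IHl. split.
    + apply Rmult_le_pos; lra.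
    + apply Rmult_le_compat; lra.
Qed.

Lemma nroot_le m w M : (0 < m)%nat -> 0 <= w -> w <= M ^ m -> 0 <= M -> nroot m w <= M.
Proof.
  intros Hm Hw HwM HM. unfold nroot. destruct (Req_EM_T w 0); [lra|].
  assert (Mp : 0 < M).
  { destruct (Req_dec M 0); [|lra]. subst. rewrite pow_i in HwM by lia. lra. }
  apply Rle_trans with (Rpower (M ^ m) (/ INR m)).
  - apply Rle_Rpower_l; [left; apply Rinv_0_lt_compat, lt_0_INR; auto| lra].
  - rewrite <- Rpower_pow by auto. rewrite Rpower_mult. rewrite Rinv_r by (apply not_0_INR; lia).
    rewrite Rpower_1 by auto. lra.
Qed.

Lemma nroot_ge m w M : (0 < m)%nat -> 0 < M -> M ^ m <= w -> M <= nroot m w.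
Proof.
  intros Hm HM Hw. assert (0 < M ^ m) by (apply pow_lt; auto).
  unfold nroot. destruct (Req_EM_T w 0); [lra|].
  apply Rle_trans with (Rpower (M ^ m) (/ INR m)).
  - rewrite <- Rpower_pow by auto. rewrite Rpower_mult. rewrite Rinv_r by (apply not_0_INR; lia).
    rewrite Rpower_1 by auto. lra.
  - apply Rle_Rpower_l; [left; apply Rinv_0_lt_compat, lt_0_INR; auto| lra].
Qed.

Lemma cyc_path n a k : (0 < n)%nat -> (k < n)%nat -> forall m j,
  path_w (Circ n a) ((j * k) mod n) (map (fun i => (i * k) mod n) (seq (S j) m))
    (((j + S m) * k) mod n) = a k ^ S m.
Proof.
  intros Hn Hk. induction m; intros j; simpl.
  - replace ((j + 1) * k)%nat with (j * k + k)%nat by lia.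
    rewrite <- Nat.Div0.add_mod_idemp_l. rewrite circ_step; auto; [ring| apply Nat.mod_upper_bound; lia].
  - replace (a k * (a k * a k ^ m)) with (a k * a k ^ S m) by (simpl; ring).
    rewrite <- (IHm (S j)).
    replace ((j + S (S m)) * k)%nat with ((S j + S m) * k)%nat by lia.
    replace ((k + j * k) mod n)%nat with ((S j * k) mod n)%nat by (f_equal; lia).
    f_equal. replace (S j * k)%nat with (j * k + k)%nat by lia.
    rewrite <- Nat.Div0.add_mod_idemp_l. rewrite circ_step; auto; apply Nat.mod_upper_bound; lia.
Qed.

Lemma lambda_circ n a k : (0 < n)%nat -> (k < n)%nat -> (forall s, (s < n)%nat -> 0 <= a s <= a k) ->
  lambda n (Circ n a) = a k.
Proof.
  intros Hn Hk Ha. assert (HA : forall i j, 0 <= Circ n a i j <= a k).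
  { intros i j; unfold Circ; apply Ha; apply Nat.mod_upper_bound; lia. }
  assert (Hak : 0 <= a k) by (apply Ha; auto).
  unfold lambda. apply Rle_antisym.
  - apply maxr_lub; auto. intros m Hm. apply nroot_le; auto; try lia.
    + apply max_list_ge0.
    + apply max_list_lub; [apply pow_le; auto|]. intros l Hl.
      apply seqs_len in Hl. destruct l as [|h l]; [simpl in Hl; lia|]. simpl in Hl.
      unfold cyc_w. rewrite <- Hl. apply path_w_le; auto.
  - destruct (Req_dec (a k) 0) as [E|E]; [rewrite E; apply maxr_ge0|].
    apply Rle_trans with (nroot (S (n - 1)) (max_list (cyc_w (Circ n a)) (seqs n (S (n - 1))))).
    + apply nroot_ge; try lia; [lra|].
      set (L := map (fun i => (i * k) mod n) (seq 0 n)).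
      replace (S (n - 1)) with n by lia.
      apply Rle_trans with (cyc_w (Circ n a) L).
      * destruct n as [|n']; [lia|].
        assert (EL : L = ((0 * k) mod S n')%nat :: map (fun i => ((i*k) mod S n')%nat) (seq 1 n')) by reflexivity.
        rewrite EL.
        change (cyc_w (Circ (S n') a) (((0 * k) mod S n')%nat :: map (fun i => ((i*k) mod S n')%nat) (seq 1 n')))
          with (path_w (Circ (S n') a) ((0 * k) mod S n')%nat (map (fun i => ((i*k) mod S n')%nat) (seq 1 n')) ((0 * k) mod S n')%nat).
        pose proof (cyc_path (S n') a k Hn Hk n' 0) as CP.
        replace (((0 + S n') * k) mod S n')%nat with ((0 * k) mod S n')%nat in CP.
        -- rewrite CP. lra.
        -- rewrite Nat.mul_0_l, Nat.add_0_l, Nat.mul_comm, Nat.Div0.mod_mul. apply Nat.Div0.mod_0_l.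
      * apply max_list_ub. apply seqs_in; unfold L.
        -- rewrite length_map, length_seq; auto.
        -- apply Forall_forall; intros x Hx. apply in_map_iff in Hx. destruct Hx as [i [<- _]].
           apply Nat.mod_upper_bound; lia.
    + apply (maxr_ub (fun k0 => nroot (S k0) (max_list (cyc_w (Circ n a)) (seqs n (S k0))))); lia.
Qed.

Lemma in_itv_bounds lo hi cl cr x : itv_ok lo hi cl cr -> in_itv lo hi cl cr x -> 0 <= x /\ lo <= x <= hi.
Proof. unfold itv_ok, in_itv. intros [H0 _] [[H1|[_ H1]] [H2|[_ H2]]]; lra. Qed.

Definition pick_lo lo hi (cl : bool) e := if cl then lo else lo + Rmin e ((hi - lo) / 2).
Definition pick_hi lo hi (cr : bool) e := if cr then hi else hi - Rmin e ((hi - lo) / 2).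

Lemma pick_lo_ok lo hi cl cr e : itv_ok lo hi cl cr -> 0 < e ->
  in_itv lo hi cl cr (pick_lo lo hi cl e) /\ lo <= pick_lo lo hi cl e <= lo + e.
Proof.
  unfold itv_ok, in_itv, pick_lo. intros [H0 H1] He. destruct cl.
  - split; [|lra]. split; [right; auto|]. destruct H1 as [H1|[H1 [_ H2]]]; [left; auto| right; auto].
  - assert (Hlt : lo < hi) by (destruct H1 as [H1|[_ [H1 _]]]; [auto| discriminate]).
    assert (0 < Rmin e ((hi - lo) / 2)) by (apply Rmin_pos; lra).
    assert (Rmin e ((hi - lo) / 2) <= e) by apply Rmin_l.
    assert (Rmin e ((hi - lo) / 2) <= (hi - lo) / 2) by apply Rmin_r.
    split; [split; left; lra| lra].
Qed.

Lemma pick_hi_ok lo hi cl cr e : itv_ok lo hi cl cr -> 0 < e ->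
  in_itv lo hi cl cr (pick_hi lo hi cr e) /\ hi - e <= pick_hi lo hi cr e <= hi.
Proof.
  unfold itv_ok, in_itv, pick_hi. intros [H0 H1] He. destruct cr.
  - split; [|lra]. split; [|right; auto]. destruct H1 as [H1|[H1 [H2 _]]]; [left; auto| right; auto].
  - assert (Hlt : lo < hi) by (destruct H1 as [H1|[_ [_ H1]]]; [auto| discriminate]).
    assert (0 < Rmin e ((hi - lo) / 2)) by (apply Rmin_pos; lra).
    assert (Rmin e ((hi - lo) / 2) <= e) by apply Rmin_l.
    assert (Rmin e ((hi - lo) / 2) <= (hi - lo) / 2) by apply Rmin_r.
    split; [split; left; lra| lra].
Qed.

Lemma argmax n (a : nat -> R) : (0 < n)%nat -> (forall s, (s < n)%nat -> 0 <= a s) ->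
  exists k, (k < n)%nat /\ forall s, (s < n)%nat -> 0 <= a s <= a k.
Proof.
  intros Hn Ha. destruct (maxr_attain a n Hn Ha) as [k [Hk E]]. exists k; split; auto.
  intros s Hs; split; auto. rewrite <- E. apply maxr_ub; auto.
Qed.

Lemma prodA_scale a0 a al l : 0 <= al <= 1 ->
  (forall s, In s l -> 0 <= a0 s /\ al * a0 s <= a s) -> al ^ length l * prodA a0 l <= prodA a l.
Proof.
  induction l; intros Hal H; unfold prodA; simpl; [lra|]. fold (prodA a0 l). fold (prodA a l).
  destruct (H a1 (or_introl eq_refl)) as [H1 H2].
  assert (IH : al ^ length l * prodA a0 l <= prodA a l) by (apply IHl; auto; intros; apply H; simpl; auto).
  assert (0 <= prodA a0 l).
  { apply prodR_ge0. intros u Hu. apply in_map_iff in Hu. destruct Hu as [s [<- Hs]]. apply H; simpl; auto. }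
  assert (0 <= al ^ length l) by (apply pow_le; lra).
  replace (al * al ^ length l * (a0 a1 * prodA a0 l)) with ((al * a0 a1) * (al ^ length l * prodA a0 l)) by ring.
  apply Rmult_le_compat; auto; apply Rmult_le_pos; lra.
Qed.

Lemma prodA_mono a b l : (forall s, In s l -> 0 <= a s <= b s) -> prodA a l <= prodA b l.
Proof.
  induction l; intros H; unfold prodA; simpl; [lra|]. fold (prodA a l). fold (prodA b l).
  destruct (H a0 (or_introl eq_refl)).
  apply Rmult_le_compat; auto.
  - apply prodR_ge0. intros u Hu. apply in_map_iff in Hu. destruct Hu as [s [<- Hs]]. apply H; simpl; auto.
  - apply IHl; intros; apply H; simpl; auto.
Qed.

Lemma prodR_le_pow L Bd : (forall u, In u L -> 0 <= u <= Bd) -> prodR L <= Bd ^ length L.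
Proof.
  induction L; intros H; simpl; [lra|]. destruct (H a (or_introl eq_refl)).
  apply Rmult_le_compat; auto.
  - apply prodR_ge0; intros; apply H; simpl; auto.
  - apply IHL; intros; apply H; simpl; auto.
Qed.

Lemma prod_eps L Bd e : (forall u, In u L -> 0 <= u <= Bd) -> 0 <= e <= 1 ->
  prodR (map (fun u => u + e) L) <= prodR L + e * INR (length L) * (Bd + 1) ^ length L.
Proof.
  induction L; intros H He; simpl; [lra|].
  destruct (H a (or_introl eq_refl)) as [Ha1 Ha2].
  assert (IH := IHL ltac:(intros; apply H; simpl; auto) He).
  set (m := length L) in *. set (P := prodR L). set (P' := prodR (map (fun u => u + e) L)) in *.
  assert (HP : 0 <= P) by (apply prodR_ge0; intros; apply H; simpl; auto).
  assert (HPQ : P <= (Bd + 1) ^ m).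
  { apply Rle_trans with (Bd ^ m). apply prodR_le_pow; intros; apply H; simpl; auto.
    apply pow_incr; lra. }
  set (Q := (Bd + 1) ^ m) in *.
  assert (HQ : 0 <= Q) by lra.
  change (match m with | 0%nat => 1 | S _ => INR m + 1 end) with (INR (S m)). rewrite S_INR.
  assert (Hm : 0 <= INR m) by apply pos_INR.
  apply Rle_trans with ((a + e) * (P + e * INR m * Q)).
  - apply Rmult_le_compat_l; [lra|]. exact IH.
  - assert (e * P <= e * Q) by (apply Rmult_le_compat_l; lra).
    assert (e * INR m * Q * e <= e * INR m * Q * 1) by (apply Rmult_le_compat_l; [apply Rmult_le_pos; [apply Rmult_le_pos|]; lra| lra]).
    assert (e * INR m * Q * a <= e * INR m * Q * Bd) by (apply Rmult_le_compat_l; [apply Rmult_le_pos; [apply Rmult_le_pos|]; lra| lra]).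
    assert (e * Q <= e * Q * (Bd + 1)) by (assert (0 <= e * Q) by (apply Rmult_le_pos; lra); nra).
    nra.
Qed.

Lemma eps_close p q C e0 : 0 <= C -> 0 < e0 -> (forall e, 0 < e <= e0 -> p <= q + e * C) -> p <= q.
Proof.
  intros HC He0 H. destruct (Rle_dec p q) as [|Hn]; auto. exfalso.
  set (e := Rmin e0 ((p - q) / (2 * (C + 1)))).
  assert (0 < (p - q) / (2 * (C + 1))) by (apply Rdiv_lt_0_compat; lra).
  assert (He : 0 < e) by (apply Rmin_pos; lra).
  assert (e <= e0) by apply Rmin_l.
  assert (e <= (p - q) / (2 * (C + 1))) by apply Rmin_r.
  specialize (H e (conj He H1)).
  assert (e * (2 * (C + 1)) <= p - q).
  { apply Rmult_le_reg_r with (/ (2 * (C + 1))); [apply Rinv_0_lt_compat; lra|].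
    rewrite Rmult_assoc, Rinv_r by lra. unfold Rdiv in H2. lra. }
  nra.
Qed.

Lemma Rdiv_le_0_compat a b : 0 <= a -> 0 < b -> 0 <= a / b.
Proof. intros; unfold Rdiv; apply Rmult_le_pos; [auto| left; apply Rinv_0_lt_compat; auto]. Qed.

Lemma dirB (n : nat) (hn : (0 < n)%nat)
  (xlo xhi : nat -> R) (xcl xcr : nat -> bool)
  (hX : forall i, (i < n)%nat -> itv_ok (xlo i) (xhi i) (xcl i) (xcr i))
  (alo ahi : nat -> R) (acl acr : nat -> bool)
  (hA : forall t, (t < n)%nat -> itv_ok (alo t) (ahi t) (acl t) (acr t))
  (H : forall i j, (i < n)%nat -> (1 <= j <= n)%nat ->
     Attr n (Ak n alo ahi i) (xk xlo xhi j))
  (a : nat -> R) (Hain : forall t, (t < n)%nat -> in_itv (alo t) (ahi t) (acl t) (acr t) (a t))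
  (x : vec) (Hxin : forall i, (i < n)%nat -> in_itv (xlo i) (xhi i) (xcl i) (xcr i) (x i)) :
  Attr n (Circ n a) x.
Proof.
  assert (ha : forall t, (t < n)%nat -> 0 <= a t /\ alo t <= a t <= ahi t)
    by (intros t Ht; destruct (in_itv_bounds _ _ _ _ _ (hA t Ht) (Hain t Ht)); auto).
  assert (hx : forall t, (t < n)%nat -> 0 <= x t /\ xlo t <= x t <= xhi t)
    by (intros t Ht; destruct (in_itv_bounds _ _ _ _ _ (hX t Ht) (Hxin t Ht)); auto).
  assert (hlo : forall t, (t < n)%nat -> 0 <= alo t) by (intros t Ht; apply (hA t Ht)).
  assert (hxlo : forall t, (t < n)%nat -> 0 <= xlo t) by (intros t Ht; apply (hX t Ht)).
  destruct (argmax n a hn) as [k [Hk Hak]]; [intros; apply ha; auto|].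
  apply (attr_char n a k hn Hk Hak x (lambda_circ n a k hn Hk Hak)).
  split; [intros; apply hx; auto|]. intros m Hm.
  set (a0 := fun t => if Nat.eqb t k then ahi t else alo t).
  assert (Ha0 : forall s, (s < n)%nat -> 0 <= a0 s <= a0 k).
  { intros s Hs. unfold a0. rewrite Nat.eqb_refl. destruct (Nat.eqb_spec s k).
    - subst. pose proof (ha k Hk); pose proof (hlo k Hk); lra.
    - pose proof (ha s Hs); pose proof (ha k Hk); pose proof (Hak s Hs); pose proof (hlo s Hs); lra. }
  assert (Ea0k : a0 k = ahi k) by (unfold a0; rewrite Nat.eqb_refl; auto).
  set (x0 := xk xlo xhi (S m)).
  assert (Hx0 : forall e, (e < n)%nat -> 0 <= x0 e).
  { intros e He; unfold x0, xk. destruct (Nat.eqb e (S m - 1)); [pose proof (hx e He)|pose proof (hxlo e He)]; lra. }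
  assert (Ex0m : x0 m = xhi m) by (unfold x0, xk; simpl; rewrite Nat.sub_0_r, Nat.eqb_refl; auto).
  pose proof (H k (S m) Hk ltac:(lia)) as HA0.
  change (Attr n (Circ n a0) x0) in HA0.
  apply (attr_char n a0 k hn Hk Ha0 x0 (lambda_circ n a0 k hn Hk Ha0)) in HA0.
  destruct HA0 as [_ Phi0]. specialize (Phi0 m Hm). rewrite Ea0k, Ex0m in Phi0.
  assert (Ha0' : forall s, (s < n)%nat -> 0 <= a0 s) by (intros; apply Ha0; auto).
  destruct (walk_attain n a0 hn Ha0' x0 Hx0 (n - 1) m Hm) as [l [Hl [Hf El]]].
  rewrite El in Phi0.
  assert (ha' : forall s, (s < n)%nat -> 0 <= a s) by (intros; apply ha; auto).
  assert (hx' : forall s, (s < n)%nat -> 0 <= x s) by (intros; apply hx; auto).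
  pose proof (walk_ub n a hn ha' x hx' (n - 1) l Hl Hf m Hm) as UB.
  assert (Hep : (endp n m l < n)%nat) by (apply endp_lt; auto).
  set (ep := endp n m l) in *.
  pose proof (ha k Hk) as [hak0 [_ hak1]]. pose proof (hx m Hm) as [hxm0 [_ hxm1]].
  destruct (Nat.eq_dec (n - 1) 0) as [E0|E0].
  { rewrite E0. simpl. rewrite it_0; auto; try lra; intros; apply circ_nonneg; auto. }
  assert (LHS0 : 0 <= prodA a l * x ep) by (apply Rmult_le_pos; [apply (prodA_ge0 n); auto| apply hx'; auto]).
  destruct (Req_dec (ahi k) 0) as [Z1|Z1].
  { replace (a k) with 0 by lra. rewrite pow_i by lia. lra. }
  destruct (Req_dec (xhi m) 0) as [Z2|Z2].
  { replace (x m) with 0 by lra. lra. }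
  set (al := a k / ahi k). set (be := x m / xhi m).
  assert (Hal : 0 <= al <= 1).
  { unfold al; split; [apply Rdiv_le_0_compat; lra|]. apply Rmult_le_reg_r with (ahi k); [lra|].
    unfold Rdiv; rewrite Rmult_assoc, Rinv_l by lra. lra. }
  assert (Hbe : 0 <= be <= 1).
  { unfold be; split; [apply Rdiv_le_0_compat; lra|]. apply Rmult_le_reg_r with (xhi m); [lra|].
    unfold Rdiv; rewrite Rmult_assoc, Rinv_l by lra. lra. }
  assert (Eak : a k = al * ahi k) by (unfold al; field; auto).
  assert (Exm : x m = be * xhi m) by (unfold be; field; auto).
  eapply Rle_trans; [|apply UB].
  rewrite Eak, Exm, Rpow_mult_distr.
  replace (al ^ (n - 1) * ahi k ^ (n - 1) * (be * xhi m)) with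
    ((al ^ (n - 1) * be) * (ahi k ^ (n - 1) * xhi m)) by ring.
  assert (0 <= al ^ (n - 1) * be) by (apply Rmult_le_pos; [apply pow_le|]; lra).
  eapply Rle_trans; [apply Rmult_le_compat_l; [auto| exact Phi0]|].
  replace (al ^ (n - 1) * be * (prodA a0 l * x0 ep)) with
    ((al ^ length l * prodA a0 l) * (be * x0 ep)) by (rewrite Hl; ring).
  assert (0 <= prodA a0 l) by (apply (prodA_ge0 n); auto).
  apply Rmult_le_compat.
  - apply Rmult_le_pos; auto. apply pow_le; lra.
  - apply Rmult_le_pos; [lra| apply Hx0; auto].
  - apply prodA_scale; auto. intros s Hs. rewrite Forall_forall in Hf. specialize (Hf s Hs).
    split; [apply Ha0'; auto|]. unfold a0. destruct (Nat.eqb_spec s k).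
    + subst. lra.
    + pose proof (ha s Hf). pose proof (hlo s Hf).
      assert (al * alo s <= alo s) by (rewrite <- (Rmult_1_l (alo s)) at 2; apply Rmult_le_compat_r; lra). lra.
  - unfold x0, xk. simpl. rewrite Nat.sub_0_r. destruct (Nat.eqb_spec ep m).
    + subst ep. rewrite e. lra.
    + pose proof (hx ep Hep). pose proof (hxlo ep Hep).
      assert (be * xlo ep <= xlo ep) by (rewrite <- (Rmult_1_l (xlo ep)) at 2; apply Rmult_le_compat_r; lra). lra.
Qed.

Lemma dirA (n : nat) (hn : (0 < n)%nat)
  (xlo xhi : nat -> R) (xcl xcr : nat -> bool)
  (hX : forall i, (i < n)%nat -> itv_ok (xlo i) (xhi i) (xcl i) (xcr i))
  (alo ahi : nat -> R) (acl acr : nat -> bool)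
  (hA : forall t, (t < n)%nat -> itv_ok (alo t) (ahi t) (acl t) (acr t))
  (R0 : forall a : nat -> R,
     (forall t, (t < n)%nat -> in_itv (alo t) (ahi t) (acl t) (acr t) (a t)) ->
     forall x : vec,
       (forall i, (i < n)%nat -> in_itv (xlo i) (xhi i) (xcl i) (xcr i) (x i)) ->
       Attr n (Circ n a) x)
  (i j : nat) (Hi : (i < n)%nat) (Hj : (1 <= j <= n)%nat) :
  Attr n (Ak n alo ahi i) (xk xlo xhi j).
Proof.
  assert (hlo : forall t, (t < n)%nat -> 0 <= alo t <= ahi t)
    by (intros t Ht; destruct (hA t Ht) as [H0 [H1|[H1 _]]]; lra).
  assert (hxlo : forall t, (t < n)%nat -> 0 <= xlo t <= xhi t)
    by (intros t Ht; destruct (hX t Ht) as [H0 [H1|[H1 _]]]; lra).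
  set (a0 := fun t => if Nat.eqb t i then ahi t else alo t).
  set (x0 := xk xlo xhi j).
  change (Attr n (Circ n a0) x0).
  assert (Ha0 : forall s, (s < n)%nat -> 0 <= a0 s).
  { intros s Hs; unfold a0; destruct (Nat.eqb s i); pose proof (hlo s Hs); lra. }
  assert (Hx0 : forall s, (s < n)%nat -> 0 <= x0 s).
  { intros s Hs; unfold x0, xk; destruct (Nat.eqb s (j - 1)); pose proof (hxlo s Hs); lra. }
  destruct (argmax n a0 hn Ha0) as [k0 [Hk0 Hak0]].
  apply (attr_char n a0 k0 hn Hk0 Hak0 x0 (lambda_circ n a0 k0 hn Hk0 Hak0)).
  split; auto. intros m Hm.
  set (Z := it n (Circ n a0) (n - 1) x0 m).
  assert (HZ : 0 <= Z) by apply mvec_ge0.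
  destruct (Nat.eq_dec (n - 1) 0) as [E0|E0].
  { unfold Z. rewrite E0. simpl. rewrite it_0; auto; try lra; intros; apply circ_nonneg; auto. }
  assert (ha0k : 0 <= a0 k0) by (apply Ha0; auto).
  destruct (Req_dec (a0 k0) 0) as [Z1|Z1].
  { rewrite Z1, pow_i by lia. lra. }
  destruct (Req_dec (x0 m) 0) as [Z2|Z2].
  { rewrite Z2. lra. }
  pose proof (Hx0 m Hm) as hx0m.
  set (Bd := a0 k0 + maxr x0 n).
  assert (HBd_a : forall s, (s < n)%nat -> 0 <= a0 s <= Bd).
  { intros s Hs. pose proof (Hak0 s Hs). pose proof (maxr_ge0 x0 n). unfold Bd; lra. }
  assert (HBd_x : forall s, (s < n)%nat -> 0 <= x0 s <= Bd).
  { intros s Hs. pose proof (maxr_ub x0 n s Hs). pose proof (Hx0 s Hs). unfold Bd; lra. }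
  set (C1 := INR n * (Bd + 1) ^ n).
  assert (HC1 : 0 <= C1) by (unfold C1; apply Rmult_le_pos; [apply pos_INR| apply pow_le; unfold Bd; pose proof (maxr_ge0 x0 n); lra]).
  apply (eps_close _ _ (2 * C1) (Rmin 1 (Rmin (a0 k0) (x0 m)))); [lra| |].
  { apply Rmin_pos; [lra| apply Rmin_pos; lra]. }
  intros e [He He0].
  assert (He1 : e <= 1) by (eapply Rle_trans; [exact He0| apply Rmin_l]).
  assert (He2 : e <= a0 k0) by (eapply Rle_trans; [exact He0|]; eapply Rle_trans; [apply Rmin_r| apply Rmin_l]).
  assert (He3 : e <= x0 m) by (eapply Rle_trans; [exact He0|]; eapply Rle_trans; [apply Rmin_r| apply Rmin_r]).
  set (ae := fun t => if Nat.eqb t i then pick_hi (alo t) (ahi t) (acr t) e else pick_lo (alo t) (ahi t) (acl t) e).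
  set (xe := fun t => if Nat.eqb t (j - 1) then pick_hi (xlo t) (xhi t) (xcr t) e else pick_lo (xlo t) (xhi t) (xcl t) e).
  assert (Fae : forall t, (t < n)%nat -> in_itv (alo t) (ahi t) (acl t) (acr t) (ae t) /\ a0 t - e <= ae t <= a0 t + e).
  { intros t Ht. unfold ae, a0. destruct (Nat.eqb t i).
    - destruct (pick_hi_ok _ _ _ _ e (hA t Ht) He). split; auto; lra.
    - destruct (pick_lo_ok _ _ _ _ e (hA t Ht) He). split; auto; lra. }
  assert (Fxe : forall t, (t < n)%nat -> in_itv (xlo t) (xhi t) (xcl t) (xcr t) (xe t) /\ x0 t - e <= xe t <= x0 t + e).
  { intros t Ht. unfold xe, x0, xk. destruct (Nat.eqb t (j - 1)).
    - destruct (pick_hi_ok _ _ _ _ e (hX t Ht) He). split; auto; lra.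
    - destruct (pick_lo_ok _ _ _ _ e (hX t Ht) He). split; auto; lra. }
  assert (Hae : forall t, (t < n)%nat -> 0 <= ae t)
    by (intros t Ht; destruct (Fae t Ht) as [F _]; apply (in_itv_bounds _ _ _ _ _ (hA t Ht) F)).
  assert (Hxe : forall t, (t < n)%nat -> 0 <= xe t)
    by (intros t Ht; destruct (Fxe t Ht) as [F _]; apply (in_itv_bounds _ _ _ _ _ (hX t Ht) F)).
  pose proof (R0 ae (fun t Ht => proj1 (Fae t Ht)) xe (fun t Ht => proj1 (Fxe t Ht))) as Rb.
  destruct (argmax n ae hn Hae) as [ke [Hke Hake]].
  apply (attr_char n ae ke hn Hke Hake xe (lambda_circ n ae ke hn Hke Hake)) in Rb.
  destruct Rb as [_ Phie]. specialize (Phie m Hm).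
  destruct (walk_attain n ae hn Hae xe Hxe (n - 1) m Hm) as [l [Hl [Hf El]]].
  rewrite El in Phie.
  assert (Hep : (endp n m l < n)%nat) by (apply endp_lt; auto).
  set (ep := endp n m l) in *.
  assert (Low : a0 k0 ^ (n - 1) * x0 m <= (a0 k0 - e) ^ (n - 1) * (x0 m - e) + e * C1).
  { set (L := repeat (a0 k0 - e) (n - 1) ++ [x0 m - e]).
    assert (HL : forall u, In u L -> 0 <= u <= Bd).
    { intros u Hu. unfold L in Hu. apply in_app_or in Hu. destruct Hu as [Hu|[Hu|[]]].
      - apply repeat_spec in Hu. subst. pose proof (HBd_a k0 Hk0); lra.
      - subst. pose proof (HBd_x m Hm); lra. }
    pose proof (prod_eps L Bd e HL ltac:(lra)) as P.
    assert (EL : length L = n) by (unfold L; rewrite length_app, repeat_length; simpl; lia).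
    rewrite EL in P. fold C1 in P.
    unfold L in P. rewrite map_app, map_repeat, !prodR_app, !prodR_repeat in P. simpl in P.
    replace (a0 k0 - e + e) with (a0 k0) in P by ring. replace (x0 m - e + e) with (x0 m) in P by ring.
    rewrite !Rmult_1_r in P. replace (e * C1) with (e * INR n * (Bd + 1) ^ n) by (unfold C1; ring). lra. }
  assert (Mid : (a0 k0 - e) ^ (n - 1) * (x0 m - e) <= ae ke ^ (n - 1) * xe m).
  { assert (a0 k0 - e <= ae ke).
    { pose proof (Hake k0 Hk0). pose proof (Fae k0 Hk0). lra. }
    assert (x0 m - e <= xe m) by (pose proof (Fxe m Hm); lra).
    apply Rmult_le_compat; [apply pow_le; lra| lra| apply pow_incr; lra| lra]. }
  assert (Up : prodA ae l * xe ep <= Z + e * C1).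
  { assert (Hall : forall s, In s l -> (s < n)%nat) by (rewrite Forall_forall in Hf; auto).
    apply Rle_trans with (prodA (fun s => a0 s + e) l * (x0 ep + e)).
    - apply Rmult_le_compat.
      + apply (prodA_ge0 n); auto.
      + apply Hxe; auto.
      + apply prodA_mono. intros s Hs. pose proof (Fae s (Hall s Hs)). pose proof (Hae s (Hall s Hs)). lra.
      + pose proof (Fxe ep Hep); lra.
    - set (L := map a0 l ++ [x0 ep]).
      assert (HL : forall u, In u L -> 0 <= u <= Bd).
      { intros u Hu. unfold L in Hu. apply in_app_or in Hu. destruct Hu as [Hu|[Hu|[]]].
        - apply in_map_iff in Hu. destruct Hu as [s [<- Hs]]. apply HBd_a; auto.
        - subst. apply HBd_x; auto. }
      pose proof (prod_eps L Bd e HL ltac:(lra)) as P.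
      assert (EL : length L = n) by (unfold L; rewrite length_app, length_map; simpl; lia).
      rewrite EL in P. fold C1 in P.
      unfold L in P. rewrite map_app, map_map, !prodR_app in P. simpl in P.
      unfold prodA.
      pose proof (walk_ub n a0 hn Ha0 x0 Hx0 (n - 1) l Hl Hf m Hm) as UB. fold ep in UB. fold Z in UB.
      unfold prodA in UB. rewrite !Rmult_1_r in P. replace (e * C1) with (e * INR n * (Bd + 1) ^ n) by (unfold C1; ring). lra. }
  lra.
Qed.

Theorem theorem4 (n : nat) (hn : (0 < n)%nat)
  (xlo xhi : nat -> R) (xcl xcr : nat -> bool)
  (hX : forall i, (i < n)%nat -> itv_ok (xlo i) (xhi i) (xcl i) (xcr i))
  (alo ahi : nat -> R) (acl acr : nat -> bool)
  (hA : forall t, (t < n)%nat -> itv_ok (alo t) (ahi t) (acl t) (acr t)) :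
  (forall a : nat -> R,
     (forall t, (t < n)%nat -> in_itv (alo t) (ahi t) (acl t) (acr t) (a t)) ->
     forall x : vec,
       (forall i, (i < n)%nat -> in_itv (xlo i) (xhi i) (xcl i) (xcr i) (x i)) ->
       Attr n (Circ n a) x)
  <->
  (forall i j, (i < n)%nat -> (1 <= j <= n)%nat ->
     Attr n (Ak n alo ahi i) (xk xlo xhi j)).
Proof.
  split.
  - intros R0 i j Hi Hj. apply (dirA n hn xlo xhi xcl xcr hX alo ahi acl acr hA R0 i j Hi Hj).
  - intros H a Ha x Hx. apply (dirB n hn xlo xhi xcl xcr hX alo ahi acl acr hA H a Ha x Hx).
Qed.
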